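(* Consider the augmented Lagrange algorithm described in the context, and assume that in step (1) the pair $(\bar y_k,\bar u_k)$ is always chosen to be a global minimizer of the augmented Lagrange sub-problem with parameters $\mu_k,\rho_k$ (together with its adjoint state). Assume that only finitely many steps of the algorithm are successful. Then $\frac1{\rho_k}\|(\mu_k+\rho_k(\bar y_k-\psi))_+\|^2_{L^2(\Omega)}$ is uniformly bounded in $k$.
   Context: Setting. Let $\Omega\subset\mathbb{R}^N$, $N\in\{2,3\}$, be a bounded domain with $C^{1,1}$ boundary $\Gamma$, or a bounded convex domain with polygonal boundary $\Gamma$. Let $y_d\in L^2(\Omega)$, $\psi\in C(\bar\Omega)$, $\alpha>0$, $u_a,u_b\in L^\infty(\Omega)$ with $u_a\le u_b$, $U_{ad}=\{u\in L^\infty(\Omega): u_a\le u\le u_b\text{ a.e.}\}$. Let $Ay=-\sum_{i,j=1}^N\partial_{x_j}(a_{ij}\partial_{x_i}y)+a_0y$ with $a_{ij}\in C^{0,1}(\bar\Omega)$, $a_0\in L^\infty(\Omega)$, $a_0\ge0$ a.e., $a_0\not\equiv0$, uniformly elliptic with constant $\delta>0$; $\partial_{\nu_A}y=\sum a_{ij}\partial_{x_i}y\,\nu_j$; $A^*$ the formal adjoint with conormal derivative $\partial_{\nu_{A^*}}$. The function $d:\Omega\times\mathbb{R}\to\mathbb{R}$ is measurable in $x$, $C^2$ in $y$ for a.e. $x$, $\|d(\cdot,0)\|_\infty+\|d_y(\cdot,0)\|_\infty+\|d_{yy}(\cdot,0)\|_\infty<\infty$, $d_y\ge0$, $d_{yy}$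 Lipschitz in $y$ on bounded sets uniformly in $x$, and $d_y>0$ on $E_\Omega\times\mathbb{R}$ for some $E_\Omega$ of positive measure. $S(u)\in H^1(\Omega)\cap C(\bar\Omega)$ is the weak solution of $Ay+d(x,y)=u$ in $\Omega$, $\partial_{\nu_A}y=0$ on $\Gamma$. $f(u)=\frac12\|S(u)-y_d\|_{L^2}^2+\frac\alpha2\|u\|_{L^2}^2$. Problem (P): minimize $f(u)$ over $u\in U_{ad}$ with $S(u)\le\psi$ on $\bar\Omega$. $(\cdot)_+=\max(0,\cdot)$ pointwise; $(a,b)_+:=\int_\Omega\max(0,a(x)b(x))dx$. Augmented Lagrange sub-problem ($\rho>0$, $0\le\mu\in L^2$): minimize $f_{AL}(u)=f(u)+\frac1{2\rho}\int_\Omega((\mu+\rho(S(u)-\psi))_+)^2dx$ over $u\in U_{ad}$. Its optimality system: $(\bar y,\bar u,\bar p)$ with $\bar u\in U_{ad}$, $\bar y=S(\bar u)$, $\bar p\in H^1(\Omega)$ weak solution of $A^*\bar p+d_y(x,\bar y)\bar p=\bar y-y_d+(\mu+\rho(\bar y-\psi))_+$, $\partial_{\nu_{A^*}}\bar p=0$, and $(\bar p+\alpha\bar u,u-\bar u)\ge0$ for all $u\in U_{ad}$ (every global minimizer with its adjoint satisfies it). Algorithm: choose $\rho_1>0$, $0\le\mu_1\in L^2(\Omega)$, $\theta>1$, $\tau\in(0,1)$, $R_0^+>0$; $k=n=1$. Iteration $k$: (1) choose a solution $(\bar y_k,\bar u_k,\bar p_k)$ of the optimality system with $\mu=\mu_k,\rho=\rho_k$;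 (2) $\bar\mu_k:=(\mu_k+\rho_k(\bar y_k-\psi))_+$; (3) $R_k:=\|(\bar y_k-\psi)_+\|_{C(\bar\Omega)}+(\bar\mu_k,\psi-\bar y_k)_+$; (4) if $R_k\le\tau R^+_{n-1}$ the step is successful: $\mu_{k+1}:=\bar\mu_k$, $\rho_{k+1}:=\rho_k$, $R_n^+:=R_k$, $n:=n+1$; (5) otherwise $\mu_{k+1}:=\mu_k$, $\rho_{k+1}:=\theta\rho_k$; then $k:=k+1$ and repeat indefinitely. *)

(* Defs.v *)
From mathcomp Require Import all_boot all_order all_algebra.
From mathcomp Require Import all_classical all_reals all_analysis.
Set Implicit Arguments.
Unset Strict Implicit.
Unset Printing Implicit Defensive.
Import Order.TTheory GRing.Theory Num.Theory.
Local Open Scope classical_set_scope.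
Local Open Scope ring_scope.

Section AL.
Context {R : realType} {d : measure_display} {T : measurableType d}.
Variable (mu : {measure set T -> \bar R}) (Om : set T).

Definition pos (a : R) : R := Num.max 0 a.

Definition sqL2 (v : T -> R) : \bar R :=
  (\int[mu]_(x in Om) ((v x) ^+ 2)%:E)%E.

Definition pos_pair (a b : T -> R) : \bar R :=
  (\int[mu]_(x in Om) (pos (a x * b x))%:E)%E.

Definition sup_pos_part (y psi : T -> R) : \bar R :=
  ereal_sup [set (pos (y x - psi x))%:E | x in Om].

Definition Uad (ua ub : T -> R) (u : T -> R) : Prop :=
  measurable_fun Om u /\
  (exists M : R, {ae mu, forall x, Om x -> `|u x| <= M}) /\
  {ae mu, forall x, Om x -> ua x <= u x <= ub x}.

Definition fobj (S : (T -> R) -> (T -> R)) (yd : T -> R) (alpha : R)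
  (u : T -> R) : \bar R :=
  ((2^-1)%:E * sqL2 (fun x => (S u x - yd x)%R) + (alpha / 2)%:E * sqL2 u)%E.

Definition mubar (m : T -> R) (rho : R) (y psi : T -> R) : T -> R :=
  fun x => pos (m x + rho * (y x - psi x)).

Definition fAL (S : (T -> R) -> (T -> R)) (yd psi : T -> R) (alpha : R)
  (m : T -> R) (rho : R) (u : T -> R) : \bar R :=
  (fobj S yd alpha u + ((2 * rho)^-1)%:E * sqL2 (mubar m rho (S u) psi))%E.

Definition Rres (y psi mb : T -> R) : \bar R :=
  (sup_pos_part y psi + pos_pair mb (fun x => (psi x - y x)%R))%E.

End AL.

(* Main.v *)
Require Import Defs.
From mathcomp Require Import all_boot all_order all_algebra.
From mathcomp Require Import all_classical all_reals all_analysis.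
Import Order.TTheory GRing.Theory Num.Theory.
From mathcomp Require Import measurable_realfun lebesgue_integral_nonneg.
Import numFieldNormedType.Exports.
From mathcomp Require Import lra.
Local Open Scope classical_set_scope.
Local Open Scope ring_scope.

Lemma sqL2_ge0 (R : realType) (d : measure_display) (T : measurableType d)
  (mu : {measure set T -> \bar R}) (D : set T) (f : T -> R) :
  (0 <= sqL2 mu D f)%E.
Proof. by apply: integral_ge0 => x _; rewrite lee_fin sqr_ge0. Qed.

Lemma msq (R : realType) (d : measure_display) (T : measurableType d)
  (D : set T) (f : T -> R) :
  measurable_fun D f -> measurable_fun D ((fun x => ((f x) ^+ 2)%:E) : T -> \bar R).
Proof. by move=> mf; apply/measurable_EFinP; exact: measurable_funX. Qed.

Lemma mubar_meas (R : realType) (d : measure_display) (T : measurableType d)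
  (D : set T) (m y psi : T -> R) (rho : R) :
  measurable_fun D m -> measurable_fun D y -> measurable_fun D psi ->
  measurable_fun D (mubar m rho y psi).
Proof.
move=> mm my mp.
rewrite (_ : mubar m rho y psi = (cst 0) \max (m \+ (cst rho \* (y \- psi)))).
  apply: measurable_maxr; first exact: measurable_cst.
  apply: measurable_funD => //; apply: measurable_funM; first exact: measurable_cst.
  exact: measurable_funB.
by apply/funext => x.
Qed.

Lemma sqL2_le (R : realType) (d : measure_display) (T : measurableType d)
  (mu : {measure set T -> \bar R}) (D : set T) (f g : T -> R) :
  measurable D -> measurable_fun D f -> measurable_fun D g ->
  (forall x, D x -> 0 <= f x <= g x) -> (sqL2 mu D f <= sqL2 mu D g)%E.
Proof.
move=> mD mf mg fg; apply: ge0_le_integral => //.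
- by move=> x _; rewrite lee_fin sqr_ge0.
- exact: msq.
- exact: msq.
move=> x Dx; rewrite lee_fin; have /andP[f0 fg'] := fg x Dx.
by rewrite !expr2 ler_pM.
Qed.

Lemma fobj_ge0 (R : realType) (d : measure_display) (T : measurableType d)
  (mu : {measure set T -> \bar R}) (D : set T) S yd (alpha : R) u :
  0 <= alpha -> (0 <= fobj mu D S yd alpha u)%E.
Proof.
move=> a0; rewrite /fobj; apply: adde_ge0; apply: mule_ge0; rewrite ?lee_fin ?sqL2_ge0 //.
by apply: divr_ge0.
Qed.



Lemma sqL2_sub_fin (R : realType) (d : measure_display) (T : measurableType d)
  (mu : {measure set T -> \bar R}) (D : set T) (f g : T -> R) :
  measurable D -> measurable_fun D f -> measurable_fun D g ->
  (sqL2 mu D f < +oo)%E -> (sqL2 mu D g < +oo)%E ->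
  (sqL2 mu D (fun x => (f x - g x)%R) < +oo)%E.
Proof.
move=> mD mf mg ff fg.
apply: (@le_lt_trans _ _ (\int[mu]_(x in D) ((2 * f x ^+ 2)%:E + (2 * g x ^+ 2)%:E))%E).
  apply: ge0_le_integral => //.
  - by move=> x _; rewrite lee_fin sqr_ge0.
  - by apply: msq; exact: measurable_funB.
  - apply: emeasurable_funD; apply/measurable_EFinP; apply: measurable_funM;
      (try exact: measurable_cst); exact: measurable_funX.
  move=> x _; rewrite -EFinD lee_fin.
  have := sqr_ge0 (f x + g x); rewrite sqrrB sqrrD; lra.
rewrite ge0_integralD //.
- under eq_integral do rewrite EFinM.
  under [X in (_ + X)%E]eq_integral do rewrite EFinM.
  rewrite ge0_integralZl_EFin //; last 2 first.
  + by move=> x _; rewrite lee_fin sqr_ge0.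
  + exact: msq.
  rewrite ge0_integralZl_EFin //; last 2 first.
  + by move=> x _; rewrite lee_fin sqr_ge0.
  + exact: msq.
  apply: lte_add_pinfty; apply: lte_mul_pinfty => //.
- by move=> x _; rewrite lee_fin mulr_ge0 // sqr_ge0.
- by apply/measurable_EFinP; apply: measurable_funM; (try exact: measurable_cst); exact: measurable_funX.
- by move=> x _; rewrite lee_fin mulr_ge0 // sqr_ge0.
- by apply/measurable_EFinP; apply: measurable_funM; (try exact: measurable_cst); exact: measurable_funX.
Qed.

Lemma sqL2_bdd_fin (R : realType) (d : measure_display) (T : measurableType d)
  (mu : {measure set T -> \bar R}) (D : set T) (f : T -> R) (M : R) :
  measurable D -> (mu D < +oo)%E -> measurable_fun D f ->
  {ae mu, forall x, D x -> `|f x| <= M} ->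
  (sqL2 mu D f < +oo)%E.
Proof.
move=> mD mDf mf Hae.
apply: (@le_lt_trans _ _ (\int[mu]_(x in D) (cst (M ^+ 2)%:E) x)%E).
  apply: ae_ge0_le_integral => //.
  - by move=> x _; rewrite lee_fin sqr_ge0.
  - exact: msq.
  - by move=> x _; rewrite lee_fin sqr_ge0.
  apply: filterS Hae => x H Dx; rewrite lee_fin /=.
  have := H Dx; rewrite ler_norml => /andP[h1 h2]; nra.
rewrite integral_cst //; apply: lte_mul_pinfty => //.
by rewrite lee_fin sqr_ge0.
Qed.

Lemma fobj_fin (R : realType) (d : measure_display) (T : measurableType d)
  (mu : {measure set T -> \bar R}) (D : set T) S yd (alpha : R) ua ub u :
  0 <= alpha -> measurable D -> (mu D < +oo)%E -> measurable_fun D yd -> (sqL2 mu D yd < +oo)%E ->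
  Uad mu D ua ub u -> measurable_fun D (S u) -> (sqL2 mu D (S u) < +oo)%E ->
  (fobj mu D S yd alpha u < +oo)%E.
Proof.
move=> a0 mD mDf myd fyd [mu' [[M HM] _]] mSu fSu.
rewrite /fobj; apply: lte_add_pinfty.
  by apply: lte_mul_pinfty; rewrite ?lee_fin //; exact: sqL2_sub_fin.
apply: lte_mul_pinfty => //; first by rewrite lee_fin divr_ge0.
exact: sqL2_bdd_fin HM.
Qed.

Theorem lemma4p5
  (R : realType) (d : measure_display) (T : measurableType d)
  (mu : {measure set T -> \bar R}) (Om : set T)
  (S : (T -> R) -> (T -> R)) (yd psi ua ub : T -> R) (alpha : R)
  (rho1 theta tau R0 : R) (mu1 : T -> R)
  (muk : nat -> T -> R) (rhok : nat -> R) (yk uk : nat -> T -> R)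
  (Rlast : nat -> \bar R) :
  (* standing assumptions *)
  measurable Om -> (0 < mu Om)%E -> (mu Om < +oo)%E ->
  measurable_fun Om yd -> (sqL2 mu Om yd < +oo)%E ->
  measurable_fun Om psi -> (exists M : R, forall x, Om x -> `|psi x| <= M) ->
  0 < alpha ->
  measurable_fun Om ua -> measurable_fun Om ub ->
  (exists M : R, {ae mu, forall x, Om x -> `|ua x| <= M /\ `|ub x| <= M}) ->
  {ae mu, forall x, Om x -> ua x <= ub x} ->
  (* the control-to-state map yields square integrable states *)
  (forall u, Uad mu Om ua ub u ->
     measurable_fun Om (S u) /\ (sqL2 mu Om (S u) < +oo)%E) ->
  (* problem (P) has a feasible point *)
  (exists u, Uad mu Om ua ub u /\ forall x, Om x -> S u x <= psi x) ->
  (* algorithm parameters *)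
  0 < rho1 -> (forall x, Om x -> 0 <= mu1 x) ->
  measurable_fun Om mu1 -> (sqL2 mu Om mu1 < +oo)%E ->
  1 < theta -> 0 < tau < 1 -> 0 < R0 ->
  (* initialisation (iteration k = 0 is the paper's first iteration) *)
  muk 0%N = mu1 -> rhok 0%N = rho1 -> Rlast 0%N = R0%:E ->
  (* step (1): (yk, uk) is a global minimizer of the AL sub-problem *)
  (forall k, Uad mu Om ua ub (uk k) /\ yk k = S (uk k) /\
     forall v, Uad mu Om ua ub v ->
       (fAL mu Om S yd psi alpha (muk k) (rhok k) (uk k)
        <= fAL mu Om S yd psi alpha (muk k) (rhok k) v)%E) ->
  (* steps (2)-(5) *)
  (forall k,
     let mb := mubar (muk k) (rhok k) (yk k) psi in
     let Rk := Rres mu Om (yk k) psi mb in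
     if asbool (Rk <= tau%:E * Rlast k)%E then
       muk k.+1 = mb /\ rhok k.+1 = rhok k /\ Rlast k.+1 = Rk
     else
       muk k.+1 = muk k /\ rhok k.+1 = theta * rhok k /\ Rlast k.+1 = Rlast k) ->
  (* only finitely many successful steps *)
  (exists K : nat, forall k, (K <= k)%N ->
     ~ (Rres mu Om (yk k) psi (mubar (muk k) (rhok k) (yk k) psi)
          <= tau%:E * Rlast k)%E) ->
  exists C : R, forall k,
    (((rhok k)^-1)%:E * sqL2 mu Om (mubar (muk k) (rhok k) (yk k) psi)
      <= C%:E)%E.
Proof.
move=> mOm Om0 Omfin myd fyd mpsi _ a0 _ _ _ _ HS [v [Uv feas]] r1 mu10 mmu1
  fmu1 th1 /andP[tau0 tau1] R00 e0 er0 eR0 Hmin Hstep [K HK].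
have [mSv fSv] := HS v Uv.
have F0 : (0 <= fobj mu Om S yd alpha v)%E by apply: fobj_ge0; exact: ltW.
have Ffin : (fobj mu Om S yd alpha v < +oo)%E.
  apply: fobj_fin; [exact: ltW|exact: mOm|exact: Omfin|exact: myd|exact: fyd|exact: Uv|exact: mSv|exact: fSv].
pose f := fine (fobj mu Om S yd alpha v).
have eF : fobj mu Om S yd alpha v = f%:E by rewrite /f fineK // ge0_fin_numE.
have f0 : 0 <= f := fine_ge0 F0.
have th0 : 0 < theta by apply: lt_trans th1.
have rpos : forall k, 0 < rhok k.
  elim=> [|k IH]; first by rewrite er0.
  have H := Hstep k; cbv zeta in H; move: H.
  by case: asboolP => _ [_ [-> _]] //; rewrite mulr_gt0.
have mmeas : forall k, measurable_fun Om (muk k) /\ (forall x, Om x -> 0 <= muk k x).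
  elim=> [|k [IH1 IH2]]; first by rewrite e0.
  have [Uk [ey _]] := Hmin k; have [my _] := HS _ Uk.
  have H := Hstep k; cbv zeta in H; move: H.
  case: asboolP => _ [-> _] //; split.
    by apply: mubar_meas => //; rewrite ey.
  by move=> x _; rewrite /mubar /pos le_max lexx.
have key : forall k,
  ((rhok k)^-1%:E * sqL2 mu Om (mubar (muk k) (rhok k) (yk k) psi)
    <= (2 * f)%:E + (rhok k)^-1%:E * sqL2 mu Om (muk k))%E.
  move=> k; have [Uk [ey Hm]] := Hmin k; have := Hm v Uv; rewrite /fAL -ey.
  have rk := rpos k.
  have c0 : 0 <= (2 * rhok k)^-1 by rewrite invr_ge0 mulr_ge0 // ltW.
  have h2 : (sqL2 mu Om (mubar (muk k) (rhok k) (S v) psi) <= sqL2 mu Om (muk k))%E.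
    have [mm mp] := mmeas k.
    apply: sqL2_le => //; first exact: mubar_meas.
    move=> x Ox; rewrite /mubar /pos le_max lexx /= ge_max mp //=.
    have := feas x Ox; rewrite -subr_le0 => hle.
    have : rhok k * (S v x - psi x) <= 0 by apply: mulr_ge0_le0 => //; exact: ltW.
    lra.
  move=> Hle.
  have hc : (((2 * rhok k)^-1)%:E * sqL2 mu Om (mubar (muk k) (rhok k) (yk k) psi)
      <= f%:E + ((2 * rhok k)^-1)%:E * sqL2 mu Om (muk k))%E.
    apply: le_trans (_ : _ <= fobj mu Om S yd alpha (uk k) + _)%E _.
      by apply: lee_paddl => //; apply: fobj_ge0; exact: ltW.
    apply: le_trans Hle _; rewrite eF; apply: leeD2l.
    by apply: lee_wpmul2l => //; rewrite lee_fin.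
  have e : (rhok k)^-1 = 2 * (2 * rhok k)^-1.
    by rewrite invfM mulrA mulfV ?mul1r // pnatr_eq0.
  rewrite e !EFinM -!muleA -ge0_muleDr //; last first.
    by apply: mule_ge0; rewrite ?lee_fin // sqL2_ge0.
  by apply: lee_wpmul2l => //; rewrite lee_fin.
pose Y k := ((rhok k)^-1%:E * sqL2 mu Om (muk k))%E.
have Yrec : forall k, (Y k.+1 <= (2 * f)%:E + Y k)%E.
  move=> k; rewrite /Y.
  have H := Hstep k; cbv zeta in H; move: H.
  case: asboolP => _ [-> [-> _]]; first exact: key.
  apply: lee_paddl; first by rewrite lee_fin mulr_ge0.
  apply: lee_wpmul2r; first exact: sqL2_ge0.
  rewrite lee_fin invfM; apply: ler_piMl.
    by rewrite invr_ge0 ltW.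
  by rewrite invf_le1 // ltW.
have Ydec : forall k, (K <= k)%N -> (Y k.+1 <= Y k)%E.
  move=> k Kk; rewrite /Y.
  have H := Hstep k; cbv zeta in H; move: H.
  rewrite asboolF; last exact: HK.
  case=> [-> [-> _]].
  apply: lee_wpmul2r; first exact: sqL2_ge0.
  rewrite lee_fin invfM; apply: ler_piMl.
    by rewrite invr_ge0 ltW.
  by rewrite invf_le1 // ltW.
pose y0 := rho1^-1 * fine (sqL2 mu Om mu1).
have Y0 : Y 0%N = y0%:E.
  rewrite /Y /y0 e0 er0 EFinM fineK // ge0_fin_numE //; exact: sqL2_ge0.
have Yb1 : forall k, (Y k <= (y0 + k%:R * (2 * f))%:E)%E.
  elim=> [|k IH]; first by rewrite Y0 mul0r addr0.
  apply: le_trans (Yrec k) _.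
  apply: le_trans (leeD2l _ IH) _.
  by rewrite -EFinD lee_fin -natr1 mulrDl mul1r; lra.
have Yb2 : forall n, (Y (K + n)%N <= Y K)%E.
  elim=> [|n IH]; first by rewrite addn0.
  by rewrite addnS; apply: le_trans (Ydec _ (leq_addr _ _)) IH.
exists (2 * f + (y0 + K%:R * (2 * f))) => k.
apply: le_trans (key k) _; rewrite EFinD; apply: leeD2l.
have f2 : 0 <= 2 * f by rewrite mulr_ge0.
have [kK|Kk] := leqP k K.
  apply: le_trans (Yb1 k) _; rewrite lee_fin lerD2l.
  by apply: ler_wpM2r => //; rewrite ler_nat.
rewrite -(subnKC (ltnW Kk)).
by apply: le_trans (Yb2 _) (Yb1 K).
Qed.
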